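(* Let $k\in\{1,2\}$, $\beta\in\mathbb{R}\setminus\{0\}$, $h>0$, and let $p:\mathbb{R}\to\mathbb{R}$ be a bounded, strictly increasing, smooth function with all derivatives bounded; set $p_j=p(x_j)$. Let $\varphi^h\in\ell^2_h(\mathbb{Z})$ be real-valued and $u=u^h(t)$ the solution of $$\frac{d}{dt}u_j + D_+D_0D_-u_j + \beta\frac{k+1}{k+2}\Big[u_j^k D_0u_j + D_0(u^{k+1})_j\Big] + h\,(D_+D_-D_+D_-u)_j=0,\quad j\in\mathbb{Z},\qquad u(0)=\varphi^h.$$ Then $$\begin{aligned} &\tfrac12\tfrac{d}{dt}\|p^{1/2}u\|_{2,h}^2+(D_-u,D_+p\,D_-u)_h+\tfrac12(D_+u,D_-p\,D_+u)_h+h(D_+D_-u,p\,D_+D_-u)_h\\ &=-\tfrac h2(D_+D_-u,D_+p\,D_-u)_h+\tfrac h2(D_+u\,D_-p,D_+D_-u)_h-(D_-u,u_-\,D_0D_-p)_h\\ &\quad-h(D_+D_-u,D_-p\,D_-u)_h-h(D_+D_-u,D_+p\,D_+u)_h-h(D_+D_-u,u\,D_+D_-p)_h\\ &\quad+\tfrac\beta2\tfrac{k+1}{k+2}\big(u^{k+1},u_+D_+p+u_-D_-p\big)_h. \end{aligned}$$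
   Context: $x_j=jh$; $(z,w)_h=\sum_j h z_jw_j$ and $\|z\|_{2,h}^2=(z,z)_h$; $\ell^2_h(\mathbb{Z})$ is the space of sequences with finite $\|\cdot\|_{2,h}$. $D_+u_j=(u_{j+1}-u_j)/h$, $D_-u_j=(u_j-u_{j-1})/h$, $D_0u_j=(u_{j+1}-u_{j-1})/(2h)$; the operators act on the sequence $p=(p_j)$ as well. Translations: $(u_+)_j=u_{j+1}$, $(u_-)_j=u_{j-1}$. Products and powers of sequences (e.g. $D_+p\,D_-u$, $p^{1/2}u$, $u^{k+1}$) are componentwise. *)

(* Defs.v *)
From Stdlib Require Import Reals ZArith.
From Coquelicot Require Import Coquelicot.
Open Scope R_scope.

Definition seqZ := Z -> R.

Definition sumZ (f : seqZ) : R :=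
  Series (fun n : nat => f (Z.of_nat n)) + Series (fun n : nat => f (- Z.of_nat (S n))%Z).

(* membership in l^2_h(Z) (h>0 is irrelevant for membership) *)
Definition in_l2 (z : seqZ) : Prop :=
  ex_series (fun n : nat => (z (Z.of_nat n))^2) /\
  ex_series (fun n : nat => (z (- Z.of_nat (S n))%Z)^2).

Definition inner (h : R) (z w : seqZ) : R := sumZ (fun j => h * z j * w j).
Definition normsq (h : R) (z : seqZ) : R := inner h z z.

Definition Dp (h : R) (u : seqZ) : seqZ := fun j => (u (j + 1)%Z - u j) / h.
Definition Dm (h : R) (u : seqZ) : seqZ := fun j => (u j - u (j - 1)%Z) / h.
Definition D0 (h : R) (u : seqZ) : seqZ := fun j => (u (j + 1)%Z - u (j - 1)%Z) / (2 * h).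

Definition shp (u : seqZ) : seqZ := fun j => u (j + 1)%Z.
Definition shm (u : seqZ) : seqZ := fun j => u (j - 1)%Z.

Definition mulZ (a b : seqZ) : seqZ := fun j => a j * b j.
Definition addZ (a b : seqZ) : seqZ := fun j => a j + b j.
Definition powZ (a : seqZ) (n : nat) : seqZ := fun j => a j ^ n.

Definition sample (p : R -> R) (h : R) : seqZ := fun j => p (IZR j * h).

(* smooth with all derivatives bounded (n = 0: p itself bounded) *)
Definition smooth (p : R -> R) : Prop := forall (n : nat) (x : R), ex_derive (Derive_n p n) x.
Definition all_derivs_bounded (p : R -> R) : Prop :=
  forall n : nat, exists M : R, forall x : R, Rabs (Derive_n p n x) <= M.
Definition strictly_increasing (p : R -> R) : Prop := forall x y, x < y -> p x < p y.

Definition l2_deriv (h : R) (u : R -> seqZ) (u' : seqZ) (t : R) : Prop :=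
  in_l2 u' /\
  is_lim (fun s => normsq h (fun j => (u (t + s) j - u t j) / s - u' j)) 0 0.

(* Main.v *)
Require Import Defs.
From Stdlib Require Import Reals ZArith Lra Lia Psatz.
From Coquelicot Require Import Coquelicot.
Open Scope R_scope.

Definition summ (f : seqZ) : Prop :=
  ex_series (fun n : nat => f (Z.of_nat n)) /\ ex_series (fun n : nat => f (- Z.of_nat (S n))%Z).
Definition bnd (f : seqZ) : Prop := exists M, forall j, Rabs (f j) <= M.

Lemma exR_plus (a b : nat -> R) : ex_series a -> ex_series b -> ex_series (fun n => a n + b n).
Proof. intros. apply (ex_series_ext (fun n => plus (a n) (b n))); [reflexivity|]. now apply (@ex_series_plus R_AbsRing R_NormedModule). Qed.
Lemma exR_scal (c : R) (a : nat -> R) : ex_series a -> ex_series (fun n => c * a n).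
Proof. intros. apply (ex_series_ext (fun n => scal c (a n))); [reflexivity|]. now apply (@ex_series_scal_l R_AbsRing R_NormedModule). Qed.
Lemma exR_le (a b : nat -> R) : (forall n, Rabs (a n) <= b n) -> ex_series b -> ex_series a.
Proof. intros. apply (ex_series_le a b); auto. Qed.
Lemma exR_ext (a b : nat -> R) : (forall n, a n = b n) -> ex_series a -> ex_series b.
Proof. intros; now apply (ex_series_ext a b). Qed.

Lemma l2_ext f g : (forall j, f j = g j) -> in_l2 f -> in_l2 g.
Proof. intros E [H1 H2]; split; [eapply exR_ext; [|exact H1] | eapply exR_ext; [|exact H2]]; intros; simpl; now rewrite E. Qed.

Lemma l2_le2 a b c C : in_l2 a -> in_l2 b -> (forall j, c j ^ 2 <= C * (a j ^ 2 + b j ^ 2)) -> in_l2 c.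
Proof.
  intros [A1 A2] [B1 B2] H; split.
  - eapply exR_le; [| apply exR_scal with (c := C); apply exR_plus; [exact A1|exact B1]].
    intros n; cbv beta; rewrite Rabs_right; [apply H | apply Rle_ge; apply pow2_ge_0].
  - eapply exR_le; [| apply exR_scal with (c := C); apply exR_plus; [exact A2|exact B2]].
    intros n; cbv beta; rewrite Rabs_right; [apply H | apply Rle_ge; apply pow2_ge_0].
Qed.

Lemma l2_lin a b al be : in_l2 a -> in_l2 b -> in_l2 (fun j => al * a j + be * b j).
Proof.
  intros A B; apply (l2_le2 a b _ (2 * (al^2 + be^2))); auto; intros j.
  nra.
Qed.

Lemma l2_shift1 a : in_l2 a -> in_l2 (fun j => a (j + 1)%Z).
Proof.
  intros [H1 H2]; split.
  - apply ex_series_incr_1 in H1. eapply exR_ext; [|exact H1]. intros n; cbv beta.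
    f_equal. f_equal. lia.
  - apply ex_series_incr_1. eapply exR_ext; [|exact H2]. intros n; cbv beta.
    f_equal. f_equal. lia.
Qed.

Lemma l2_shiftm1 a : in_l2 a -> in_l2 (fun j => a (j - 1)%Z).
Proof.
  intros [H1 H2]; split.
  - apply ex_series_incr_1. eapply exR_ext; [|exact H1]. intros n; cbv beta.
    f_equal. f_equal. lia.
  - apply ex_series_incr_1 in H2. eapply exR_ext; [|exact H2]. intros n; cbv beta.
    f_equal. f_equal. lia.
Qed.

Lemma l2_shift (c : Z) : forall a, in_l2 a -> in_l2 (fun j => a (j + c)%Z).
Proof.
  induction c using Z.peano_ind; intros a H.
  - eapply l2_ext; [|exact H]. intros j; simpl. now rewrite Z.add_0_r.
  - apply IHc in H. apply l2_shift1 in H. eapply l2_ext; [|exact H]. intros j; simpl.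
    f_equal; lia.
  - apply IHc in H. apply l2_shiftm1 in H. eapply l2_ext; [|exact H]. intros j; simpl.
    f_equal; lia.
Qed.

Lemma term_le_Series (a : nat -> R) n : (forall m, 0 <= a m) -> ex_series a -> a n <= Series a.
Proof.
  intros Hp He.
  assert (Hl : is_lim_seq (sum_n a) (Series a)) by (apply Series_correct; exact He).
  assert (Hs : forall m, 0 <= sum_n a m /\ a m <= sum_n a m).
  { induction m. - rewrite sum_O. split; [apply Hp|lra].
    - rewrite sum_Sn. unfold plus; simpl. specialize (Hp (S m)). lra. }
  apply Rle_trans with (sum_n a n); [apply Hs|].
  apply (is_lim_seq_incr_compare (sum_n a) (Series a) Hl).
  intros m. rewrite sum_Sn. unfold plus; simpl. specialize (Hp (S m)). lra.
Qed.

Lemma bnd_l2 a : in_l2 a -> bnd a.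
Proof.
  intros [H1 H2].
  exists (Series (fun n : nat => a (Z.of_nat n) ^ 2) + Series (fun n : nat => a (- Z.of_nat (S n))%Z ^ 2) + 1).
  assert (P1 : forall n, a (Z.of_nat n) ^ 2 <= Series (fun n : nat => a (Z.of_nat n) ^ 2))
    by (intros; apply (term_le_Series (fun n => a (Z.of_nat n) ^ 2)); auto; intros; apply pow2_ge_0).
  assert (P2 : forall n, a (- Z.of_nat (S n))%Z ^ 2 <= Series (fun n : nat => a (- Z.of_nat (S n))%Z ^ 2))
    by (intros; apply (term_le_Series (fun n => a (- Z.of_nat (S n))%Z ^ 2)); auto; intros; apply pow2_ge_0).
  assert (S1 : 0 <= Series (fun n : nat => a (Z.of_nat n) ^ 2)) by (eapply Rle_trans; [apply pow2_ge_0|apply (P1 0%nat)]).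
  assert (S2 : 0 <= Series (fun n : nat => a (- Z.of_nat (S n))%Z ^ 2)) by (eapply Rle_trans; [apply pow2_ge_0|apply (P2 0%nat)]).
  assert (K : forall x, Rabs x <= x ^ 2 + 1).
  { intros x. destruct (Rle_lt_dec (Rabs x) 1).
    - assert (0 <= x^2) by apply pow2_ge_0. lra.
    - assert (x ^ 2 = Rabs x * Rabs x) by (rewrite <- Rabs_mult; simpl; rewrite Rmult_1_r; rewrite Rabs_right; [ring| apply Rle_ge; apply Rle_0_sqr]). nra. }
  intros j. eapply Rle_trans; [apply K|].
  destruct (Z_le_gt_dec 0 j) as [Hj|Hj].
  - specialize (P1 (Z.to_nat j)). rewrite Z2Nat.id in P1 by lia. lra.
  - specialize (P2 (Z.to_nat (- j - 1))).
    replace (- Z.of_nat (S (Z.to_nat (- j - 1))))%Z with j in P2 by lia. lra.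
Qed.

Lemma l2_bmul B a : bnd B -> in_l2 a -> in_l2 (fun j => B j * a j).
Proof.
  intros [M HM] A. apply (l2_le2 a a _ (M^2)); auto. intros j.
  specialize (HM j). assert (0 <= Rabs (B j)) by apply Rabs_pos.
  assert (B j ^ 2 = Rabs (B j) ^ 2) by (simpl; rewrite !Rmult_1_r, <- Rabs_mult, Rabs_right; [ring|apply Rle_ge, Rle_0_sqr]).
  assert (0 <= a j ^ 2) by apply pow2_ge_0.
  assert (Rabs (B j) ^ 2 <= M ^ 2) by (apply pow_incr; lra).
  rewrite Rpow_mult_distr. nra.
Qed.

Lemma bnd_ext f g : (forall j, f j = g j) -> bnd f -> bnd g.
Proof. intros E [M H]; exists M; intros j; rewrite <- E; auto. Qed.
Lemma bnd_shift (c : Z) a : bnd a -> bnd (fun j => a (j + c)%Z).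
Proof. intros [M H]; exists M; intros j; auto. Qed.
Lemma bnd_mul a b : bnd a -> bnd b -> bnd (fun j => a j * b j).
Proof.
  intros [M H] [N K]; exists (M * N); intros j. rewrite Rabs_mult.
  apply Rmult_le_compat; auto using Rabs_pos.
Qed.
Lemma bnd_lin a b al be : bnd a -> bnd b -> bnd (fun j => al * a j + be * b j).
Proof.
  intros [M H] [N K]; exists (Rabs al * M + Rabs be * N); intros j.
  eapply Rle_trans; [apply Rabs_triang|]. rewrite !Rabs_mult.
  apply Rplus_le_compat; apply Rmult_le_compat_l; auto using Rabs_pos.
Qed.
Lemma bnd_pow a n : bnd a -> bnd (fun j => a j ^ n).
Proof.
  intros [M H]; exists (M ^ n); intros j. rewrite <- RPow_abs. apply pow_incr.
  split; auto using Rabs_pos.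
Qed.
Lemma bnd_Dp h a : bnd a -> bnd (Dp h a).
Proof. intros A. eapply bnd_ext; [|apply (bnd_lin _ _ (/h) (-/h) (bnd_shift 1 a A) A)].
  intros j; unfold Dp; unfold Rdiv; ring. Qed.
Lemma bnd_Dm h a : bnd a -> bnd (Dm h a).
Proof. intros A. eapply bnd_ext; [|apply (bnd_lin _ _ (/h) (-/h) A (bnd_shift (-1) a A))].
  intros j; unfold Dm; replace (j - 1)%Z with (j + -1)%Z by lia; unfold Rdiv; ring. Qed.
Lemma bnd_D0 h a : bnd a -> bnd (D0 h a).
Proof. intros A. eapply bnd_ext; [|apply (bnd_lin _ _ (/(2*h)) (-/(2*h)) (bnd_shift 1 a A) (bnd_shift (-1) a A))].
  intros j; unfold D0; replace (j - 1)%Z with (j + -1)%Z by lia; unfold Rdiv; ring. Qed.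

Lemma l2_Dp h a : in_l2 a -> in_l2 (Dp h a).
Proof. intros A. eapply l2_ext; [|apply (l2_lin _ _ (/h) (-/h) (l2_shift 1 a A) A)].
  intros j; unfold Dp; unfold Rdiv; ring. Qed.
Lemma l2_Dm h a : in_l2 a -> in_l2 (Dm h a).
Proof. intros A. eapply l2_ext; [|apply (l2_lin _ _ (/h) (-/h) A (l2_shift (-1) a A))].
  intros j; unfold Dm; replace (j - 1)%Z with (j + -1)%Z by lia; unfold Rdiv; ring. Qed.
Lemma l2_D0 h a : in_l2 a -> in_l2 (D0 h a).
Proof. intros A. eapply l2_ext; [|apply (l2_lin _ _ (/(2*h)) (-/(2*h)) (l2_shift 1 a A) (l2_shift (-1) a A))].
  intros j; unfold D0; replace (j - 1)%Z with (j + -1)%Z by lia; unfold Rdiv; ring. Qed.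
Lemma l2_shp a : in_l2 a -> in_l2 (shp a).
Proof. exact (l2_shift 1 a). Qed.
Lemma l2_shm a : in_l2 a -> in_l2 (shm a).
Proof. exact (l2_shift (-1) a). Qed.
Lemma l2_add a b : in_l2 a -> in_l2 b -> in_l2 (addZ a b).
Proof. intros A B. eapply l2_ext; [|apply (l2_lin _ _ 1 1 A B)]. intros j; unfold addZ; ring. Qed.
Lemma l2_mulbl B a : bnd B -> in_l2 a -> in_l2 (mulZ B a).
Proof. exact (l2_bmul B a). Qed.
Lemma l2_mulbr B a : bnd B -> in_l2 a -> in_l2 (mulZ a B).
Proof. intros. eapply l2_ext; [|apply (l2_bmul B a); auto]. intros j; unfold mulZ; ring. Qed.
Lemma l2_pow a n : in_l2 a -> in_l2 (powZ a (S n)).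
Proof. intros A. eapply l2_ext; [|apply (l2_bmul (fun j => a j ^ n) a); auto using bnd_pow, bnd_l2].
  intros j; unfold powZ; simpl; ring. Qed.

Lemma summ_plus f g : summ f -> summ g -> summ (fun j => f j + g j).
Proof. intros [A1 A2] [B1 B2]; split; apply exR_plus; auto. Qed.
Lemma summ_scal c f : summ f -> summ (fun j => c * f j).
Proof. intros [A1 A2]; split; apply exR_scal; auto. Qed.
Lemma summ_l2 a b : in_l2 a -> in_l2 b -> summ (fun j => a j * b j).
Proof.
  intros [A1 A2] [B1 B2]; split.
  - eapply exR_le; [| apply exR_scal with (c := /2); apply exR_plus; [exact A1|exact B1]].
    intros n; cbv beta. set (x := a _); set (y := b _).
    rewrite Rabs_mult. assert (0 <= (Rabs x - Rabs y)^2) by apply pow2_ge_0.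
    assert (Rabs x ^ 2 = x ^ 2) by (rewrite RPow_abs; simpl; rewrite !Rmult_1_r, Rabs_right; [ring|apply Rle_ge, Rle_0_sqr]).
    assert (Rabs y ^ 2 = y ^ 2) by (rewrite RPow_abs; simpl; rewrite !Rmult_1_r, Rabs_right; [ring|apply Rle_ge, Rle_0_sqr]).
    nra.
  - eapply exR_le; [| apply exR_scal with (c := /2); apply exR_plus; [exact A2|exact B2]].
    intros n; cbv beta. set (x := a _); set (y := b _).
    rewrite Rabs_mult. assert (0 <= (Rabs x - Rabs y)^2) by apply pow2_ge_0.
    assert (Rabs x ^ 2 = x ^ 2) by (rewrite RPow_abs; simpl; rewrite !Rmult_1_r, Rabs_right; [ring|apply Rle_ge, Rle_0_sqr]).
    assert (Rabs y ^ 2 = y ^ 2) by (rewrite RPow_abs; simpl; rewrite !Rmult_1_r, Rabs_right; [ring|apply Rle_ge, Rle_0_sqr]).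
    nra.
Qed.
Lemma summ_ext f g : (forall j, f j = g j) -> summ f -> summ g.
Proof. intros E [A B]; split; [eapply exR_ext; [|exact A]|eapply exR_ext; [|exact B]]; intros; cbv beta; auto. Qed.
Lemma summ_inner h a b : in_l2 a -> in_l2 b -> summ (fun j => h * a j * b j).
Proof. intros A B. eapply summ_ext; [|apply (summ_scal h), (summ_l2 a b A B)]. intros; cbv beta; ring. Qed.
Lemma summ_term c B a b : bnd B -> in_l2 a -> in_l2 b -> summ (fun j => c * (B j * (a j * b j))).
Proof. intros HB A Bb. eapply summ_ext; [|apply (summ_scal c), (summ_l2 (fun j => B j * a j) b); auto using l2_bmul].
  intros; cbv beta; ring. Qed.

Lemma sumZ_plus f g : summ f -> summ g -> sumZ f + sumZ g = sumZ (fun j => f j + g j).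
Proof. intros [A1 A2] [B1 B2]; unfold sumZ. rewrite !Series_plus; auto; ring. Qed.
Lemma sumZ_scal c f : c * sumZ f = sumZ (fun j => c * f j).
Proof. unfold sumZ. rewrite !Series_scal_l; ring. Qed.
Lemma sumZ_ext f g : (forall j, f j = g j) -> sumZ f = sumZ g.
Proof. intros E; unfold sumZ; f_equal; apply Series_ext; intros; auto. Qed.
Lemma sumZ_shift1 G : summ G -> sumZ (fun j => G (j + 1)%Z) = sumZ G.
Proof.
  intros [A1 A2]; unfold sumZ.
  rewrite (Series_incr_1 (fun n => G (Z.of_nat n))) by auto.
  assert (E1 : Series (fun n : nat => G (Z.of_nat n + 1)%Z) = Series (fun k : nat => G (Z.of_nat (S k))))
    by (apply Series_ext; intros; f_equal; lia).
  assert (A3 : ex_series (fun n : nat => G (- Z.of_nat (S n) + 1)%Z)).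
  { apply ex_series_incr_1. eapply exR_ext; [|exact A2]. intros; cbv beta; f_equal; lia. }
  rewrite (Series_incr_1 (fun n => G (- Z.of_nat (S n) + 1)%Z)) by auto.
  assert (E2 : Series (fun k : nat => G (- Z.of_nat (S (S k)) + 1)%Z) = Series (fun n : nat => G (- Z.of_nat (S n))%Z))
    by (apply Series_ext; intros; f_equal; lia).
  rewrite E1, E2. replace (- Z.of_nat 1 + 1)%Z with 0%Z by lia. simpl. ring.
Qed.
Lemma sumZ_tele G : summ G -> sumZ (fun j => G (j + 1)%Z - G j) = 0.
Proof.
  intros HG.
  assert (HG1 : summ (fun j => G (j + 1)%Z)).
  { destruct HG as [A1 A2]; split.
    - apply ex_series_incr_1 in A1. eapply exR_ext; [|exact A1]. intros; cbv beta; f_equal; lia.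
    - apply ex_series_incr_1. eapply exR_ext; [|exact A2]. intros; cbv beta; f_equal; lia. }
  rewrite <- (sumZ_ext (fun j => G (j + 1)%Z + (-1) * G j)) by (intros; ring).
  rewrite <- sumZ_plus by auto using summ_scal.
  rewrite <- sumZ_scal, sumZ_shift1 by auto. ring.
Qed.
Lemma sumZ_le f g : summ f -> summ g -> (forall j, f j <= g j) -> sumZ f <= sumZ g.
Proof.
  intros [A1 A2] [B1 B2] H. unfold sumZ.
  assert (forall a b : nat -> R, ex_series a -> ex_series b -> (forall n, a n <= b n) -> Series a <= Series b).
  { intros a b Ha Hb Hab. assert (0 <= Series (fun n => b n - a n)).
    { replace 0 with (Series (fun _ : nat => 0 * 0)) by (rewrite (Series_scal_l 0 (fun _ => 0)); ring).
      apply Series_le. intros; specialize (Hab n); lra.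
      apply (ex_series_ext (fun n => plus (b n) (opp (a n)))); [reflexivity|].
      apply (@ex_series_minus R_AbsRing R_NormedModule); auto. }
    rewrite Series_minus in H0; auto. lra. }
  apply Rplus_le_compat; apply H0; auto.
Qed.

Definition Gfun (h beta c : R) (k : nat) (P v : seqZ) (j : Z) : R :=
  ((1/2) * / h ^ 2) * (P (j + (-2))%Z * (v (j + (-1))%Z * v (j + (-1))%Z))
  + ((-1/2) * / h ^ 2) * (P (j + (-2))%Z * (v (j + (-1))%Z * v j))
  + ((-3/2) * / h ^ 2) * (P (j + (-1))%Z * (v (j + (-1))%Z * v (j + (-1))%Z))
  + ((3/1) * / h ^ 2) * (P (j + (-1))%Z * (v (j + (-1))%Z * v j))
  + ((-3/2) * / h ^ 2) * (P (j + (-1))%Z * (v (j + (-1))%Z * v (j + 1)%Z))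
  + ((1/2) * / h ^ 2) * (P j * (v (j + (-2))%Z * v j))
  + ((-3/2) * / h ^ 2) * (P j * (v (j + (-1))%Z * v j))
  + ((1/1) * / h ^ 2) * (P j * (v j * v j))
  + (- (beta / 2 * c)) * ((P (j + (-1))%Z * v j ^ k) * (v (j + (-1))%Z * v j))
  + (- (beta / 2 * c)) * ((P j * v (j + (-1))%Z ^ k) * (v j * v (j + (-1))%Z)).

Ltac isPcst p := match p with xH => idtac | xO ?q => isPcst q | xI ?q => isPcst q end.
Ltac isZcst c := match c with Z0 => idtac | Zpos ?p => isPcst p | Zneg ?p => isPcst p end.
Ltac normZ :=
  unfold Z.sub;
  repeat rewrite <- Z.add_assoc;
  repeat match goal with
  | |- context [Z.opp ?a] => isZcst a; let c := eval vm_compute in (Z.opp a) in change (Z.opp a) with c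
  | |- context [Z.add ?a ?b] => isZcst a; isZcst b; let c := eval vm_compute in (Z.add a b) in change (Z.add a b) with c
  end;
  repeat rewrite Z.add_0_r.

Ltac solve_bnd := match goal with
  | |- bnd (Dp _ _) => apply bnd_Dp; solve_bnd
  | |- bnd (Dm _ _) => apply bnd_Dm; solve_bnd
  | |- bnd (D0 _ _) => apply bnd_D0; solve_bnd
  | |- bnd (fun j => _ * _) => apply bnd_mul; solve_bnd
  | |- bnd (fun j => _ ^ _) => apply bnd_pow; solve_bnd
  | |- bnd (fun j => _ (j + _)%Z) => apply bnd_shift; solve_bnd
  | |- bnd (fun j => ?f j) => change (bnd f); solve_bnd
  | |- _ => assumption
  | |- bnd _ => apply bnd_l2; assumption
  end.
Ltac solve_l2 := match goal with
  | |- in_l2 (Dp _ _) => apply l2_Dp; solve_l2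
  | |- in_l2 (Dm _ _) => apply l2_Dm; solve_l2
  | |- in_l2 (D0 _ _) => apply l2_D0; solve_l2
  | |- in_l2 (shp _) => apply l2_shp; solve_l2
  | |- in_l2 (shm _) => apply l2_shm; solve_l2
  | |- in_l2 (addZ _ _) => apply l2_add; solve_l2
  | |- in_l2 (powZ _ (S _)) => apply l2_pow; solve_l2
  | |- in_l2 (mulZ _ _) => first [ apply l2_mulbl; [solve_bnd | solve_l2] | apply l2_mulbr; [solve_bnd | solve_l2] ]
  | |- in_l2 (fun j => _ (j + _)%Z) => apply l2_shift; solve_l2
  | |- in_l2 (fun j => ?f j) => change (in_l2 f); solve_l2
  | |- _ => assumption
  end.
Ltac solve_summ := match goal with
  | |- summ (fun j => _ + _) => apply summ_plus; solve_summ
  | |- summ (fun j => _ * (_ * (_ * _))) => apply summ_term; [solve_bnd | solve_l2 | solve_l2]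
  | |- summ (fun j => ?h * _ * _) => apply summ_inner; solve_l2
  | |- summ (fun j => _ * _) => apply summ_scal; solve_summ
  end.

Lemma core h beta k (P v w : seqZ) : h <> 0 -> bnd P -> in_l2 v -> in_l2 w ->
  (forall j : Z,
     w j + Dp h (D0 h (Dm h v)) j
     + beta * ((INR k + 1) / (INR k + 2))
       * (v j ^ k * D0 h v j + D0 h (powZ v (S k)) j)
     + h * Dp h (Dm h (Dp h (Dm h v))) j = 0) ->
  inner h (mulZ P v) w
  + inner h (Dm h v) (mulZ (Dp h P) (Dm h v))
  + / 2 * inner h (Dp h v) (mulZ (Dm h P) (Dp h v))
  + h * inner h (Dp h (Dm h v)) (mulZ P (Dp h (Dm h v)))
  + (h / 2) * inner h (Dp h (Dm h v)) (mulZ (Dp h P) (Dm h v))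
  + (- (h / 2)) * inner h (mulZ (Dp h v) (Dm h P)) (Dp h (Dm h v))
  + inner h (Dm h v) (mulZ (shm v) (D0 h (Dm h P)))
  + h * inner h (Dp h (Dm h v)) (mulZ (Dm h P) (Dm h v))
  + h * inner h (Dp h (Dm h v)) (mulZ (Dp h P) (Dp h v))
  + h * inner h (Dp h (Dm h v)) (mulZ v (Dp h (Dm h P)))
  + (- (beta / 2 * ((INR k + 1) / (INR k + 2))))
      * inner h (powZ v (S k)) (addZ (mulZ (shp v) (Dp h P)) (mulZ (shm v) (Dm h P)))
  = 0.
Proof.
  intros Hh HP Hv Hw Heq.
  unfold inner.
  rewrite !sumZ_scal.
  rewrite !sumZ_plus; [| solve_summ ..].
  set (c := (INR k + 1) / (INR k + 2)) in *.
  rewrite (sumZ_ext _ (fun j => Gfun h beta c k P v (j + 1)%Z - Gfun h beta c k P v j)).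
  { apply sumZ_tele. unfold Gfun. solve_summ. }
  intros j. specialize (Heq j).
  match goal with |- ?I = ?R => match type of Heq with ?L = 0 =>
    assert (E : I - R = h * P j * v j * L); [ | rewrite Heq in E; lra ] end end.
unfold Gfun, Dp, Dm, D0, mulZ, shp, shm, powZ, addZ.
  normZ. rewrite <- !tech_pow_Rmult. clearbody c. unfold Rdiv. rewrite ?Rinv_mult. field. auto. Qed.

Lemma sumZ_abs f g : summ f -> summ g -> (forall j, Rabs (f j) <= g j) -> Rabs (sumZ f) <= sumZ g.
Proof.
  intros Hf Hg H. apply Rabs_le. split.
  - assert (sumZ (fun j => -1 * f j) <= sumZ g).
    { apply sumZ_le; auto using summ_scal. intros j; specialize (H j). apply Rabs_le_between in H.  lra. }
    rewrite <- sumZ_scal in H0. lra.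
  - apply sumZ_le; auto. intros j; specialize (H j). apply Rabs_le_between in H. lra.
Qed.

Lemma sumZ_ge0 f : summ f -> (forall j, 0 <= f j) -> 0 <= sumZ f.
Proof.
  intros Hf H. replace 0 with (sumZ (fun j => 0 * f j)) by (rewrite <- sumZ_scal; ring).
  apply sumZ_le; auto using summ_scal. intros j; specialize (H j); lra.
Qed.

Lemma absbound P0 M v e w s h lam : 0 < h -> 0 < lam -> Rabs P0 <= M ->
  Rabs (h * P0 * (2 * v * e + s * (e + w) ^ 2))
  <= M * lam * (h * v * v) + (M * / lam + 2 * M * Rabs s) * (h * e * e) + 2 * M * Rabs s * (h * w * w).
Proof.
  intros Hh Hl HP.
  assert (H1 : Rabs (2 * v * e) <= lam * v ^ 2 + / lam * e ^ 2).
  { apply Rabs_le. assert (0 <= (lam * v - e) ^ 2 / lam) by (apply Rdiv_le_0_compat; [apply pow2_ge_0|lra]).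
    assert (0 <= (lam * v + e) ^ 2 / lam) by (apply Rdiv_le_0_compat; [apply pow2_ge_0|lra]).
    split.
    - replace ((lam * v + e) ^ 2 / lam) with (lam * v ^ 2 + / lam * e ^ 2 + 2 * v * e) in H0 by (field; lra). lra.
    - replace ((lam * v - e) ^ 2 / lam) with (lam * v ^ 2 + / lam * e ^ 2 - 2 * v * e) in H by (field; lra). lra. }
  assert (H2 : Rabs (s * (e + w) ^ 2) <= Rabs s * (2 * e ^ 2 + 2 * w ^ 2)).
  { rewrite Rabs_mult. apply Rmult_le_compat_l; [apply Rabs_pos|].
    rewrite Rabs_right by (apply Rle_ge, pow2_ge_0). assert (0 <= (e - w)^2) by apply pow2_ge_0. nra. }
  assert (H3 : Rabs (2 * v * e + s * (e + w) ^ 2) <= lam * v ^ 2 + / lam * e ^ 2 + Rabs s * (2 * e ^ 2 + 2 * w ^ 2)).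
  { eapply Rle_trans; [apply Rabs_triang|]. lra. }
  rewrite Rabs_mult, Rabs_mult, (Rabs_right h) by lra.
  assert (0 <= M) by (eapply Rle_trans; [apply Rabs_pos|exact HP]).
  apply Rle_trans with (h * M * (lam * v ^ 2 + / lam * e ^ 2 + Rabs s * (2 * e ^ 2 + 2 * w ^ 2))).
  - apply Rmult_le_compat; [apply Rmult_le_pos; [lra|apply Rabs_pos]|apply Rabs_pos| |exact H3].
    apply Rmult_le_compat_l; lra.
  - right. simpl. ring.
Qed.

Lemma ball0 (d : posreal) (s : R) : Rabs s < d -> ball 0 d s.
Proof. intros. unfold ball; simpl. unfold AbsRing_ball, abs, minus, plus, opp; simpl. rewrite Ropp_0, Rplus_0_r. exact H. Qed.

Lemma deriv_F h P (u : R -> seqZ) w t T : 0 < h -> bnd P -> 0 < t < T ->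
  (forall s, 0 <= s < T -> in_l2 (u s)) -> l2_deriv h u w t ->
  is_derive (fun s => inner h (mulZ P (u s)) (u s)) t (2 * inner h (mulZ P (u t)) w).
Proof.
  intros Hh HP Ht Hu [Hw Hlim].
  pose proof HP as [M HM].
  assert (HM0 : 0 <= M) by (eapply Rle_trans; [apply Rabs_pos|apply (HM 0%Z)]).
  assert (Hv : in_l2 (u t)) by (apply Hu; lra).
  set (v := u t) in *.
  set (Sv := sumZ (fun j => h * v j * v j)).
  set (Sw := sumZ (fun j => h * w j * w j)).
  assert (HSv : 0 <= Sv) by (apply sumZ_ge0; [apply summ_inner; auto| intros j; rewrite Rmult_assoc; apply Rmult_le_pos; [lra|apply Rle_0_sqr]]).
  assert (HSw : 0 <= Sw) by (apply sumZ_ge0; [apply summ_inner; auto| intros j; rewrite Rmult_assoc; apply Rmult_le_pos; [lra|apply Rle_0_sqr]]).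
  apply is_derive_Reals. intros eps Heps.
  assert (Hlam : 0 < eps / (4 * (M * Sv + 1))) by (apply Rdiv_lt_0_compat; nra).
  set (lam := eps / (4 * (M * Sv + 1))) in *.
  assert (He1 : 0 < eps / (4 * (M / lam + 2 * M + 1))).
  { apply Rdiv_lt_0_compat; [lra|]. assert (0 <= M / lam) by (apply Rdiv_le_0_compat; lra). lra. }
  set (e1 := eps / (4 * (M / lam + 2 * M + 1))) in *.
  assert (Hd2 : 0 < eps / (4 * (2 * M * Sw + 1))) by (apply Rdiv_lt_0_compat; nra).
  set (d2 := eps / (4 * (2 * M * Sw + 1))) in *.
  apply is_lim_spec in Hlim. destruct (Hlim (mkposreal e1 He1)) as [d Hd].
  assert (Hdel : 0 < Rmin (Rmin d (Rmin t (T - t))) (Rmin 1 d2)).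
  { repeat apply Rmin_pos; try lra. apply cond_pos. }
  exists (mkposreal _ Hdel). intros s Hs0 Hs. simpl in Hs.
  assert (Hs1 : Rabs s < d) by (eapply Rlt_le_trans; [exact Hs|]; eapply Rle_trans; apply Rmin_l).
  assert (Hs2 : Rabs s < Rmin t (T - t)) by (eapply Rlt_le_trans; [exact Hs|]; eapply Rle_trans; [apply Rmin_l|apply Rmin_r]).
  assert (Hs3 : Rabs s < 1) by (eapply Rlt_le_trans; [exact Hs|]; eapply Rle_trans; [apply Rmin_r|apply Rmin_l]).
  assert (Hs4 : Rabs s < d2) by (eapply Rlt_le_trans; [exact Hs|]; eapply Rle_trans; [apply Rmin_r|apply Rmin_r]).
  assert (Hts : 0 <= t + s < T).
  { apply Rabs_lt_between in Hs2. pose proof (Rmin_l t (T - t)). pose proof (Rmin_r t (T - t)). lra. }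
  specialize (Hd s (ball0 d s Hs1) Hs0). simpl in Hd.
  pose proof (Hu _ Hts) as Hut.
  set (ut := u (t + s)) in *.
  set (e := fun j => (ut j - v j) / s - w j).
  assert (He : in_l2 e).
  { eapply l2_ext; [| apply (l2_lin _ _ 1 (-1) (l2_lin _ _ (/s) (- / s) Hut Hv) Hw)].
    intros j; unfold e; cbv beta; field; auto. }
  assert (HN : sumZ (fun j => h * e j * e j) < e1).
  { unfold normsq, inner in Hd. rewrite Rminus_0_r in Hd.
    eapply Rle_lt_trans; [apply Rle_abs| exact Hd]. }
  assert (HN0 : 0 <= sumZ (fun j => h * e j * e j))
    by (apply sumZ_ge0; [apply summ_inner; auto| intros j; rewrite Rmult_assoc; apply Rmult_le_pos; [lra|apply Rle_0_sqr]]).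
  set (N := sumZ (fun j => h * e j * e j)) in *.
  assert (Key : (inner h (mulZ P ut) ut - inner h (mulZ P v) v) / s - 2 * inner h (mulZ P v) w
     = sumZ (fun j => h * P j * (2 * v j * e j + s * (e j + w j) ^ 2))).
  { unfold inner.
    replace ((sumZ (fun j : Z => h * mulZ P ut j * ut j) - sumZ (fun j : Z => h * mulZ P v j * v j)) / s -
      2 * sumZ (fun j : Z => h * mulZ P v j * w j)) with
      (/ s * sumZ (fun j : Z => h * mulZ P ut j * ut j) + (- / s * sumZ (fun j : Z => h * mulZ P v j * v j) +
      -2 * sumZ (fun j : Z => h * mulZ P v j * w j))) by (field; auto).
    rewrite !sumZ_scal.
    rewrite !sumZ_plus; try (repeat apply summ_plus; apply summ_scal; apply summ_inner; auto; apply l2_mulbl; auto).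
    apply sumZ_ext. intros j. unfold e, mulZ. field. auto. }
  change (u t) with v. rewrite Key.
  eapply Rle_lt_trans.
  { apply sumZ_abs; [ | | intros j; apply (absbound (P j) M (v j) (e j) (w j) s h lam); auto].
    - assert (Hew : in_l2 (fun j => e j + w j)) by (eapply l2_ext; [|apply (l2_lin e w 1 1 He Hw)]; intros; simpl; ring).
      assert (S1 : summ (fun j => 2 * (h * mulZ P v j * e j))) by (apply summ_scal, summ_inner; auto; apply l2_mulbl; auto).
      assert (S2 : summ (fun j => s * (h * mulZ P (fun j => e j + w j) j * (e j + w j))))
        by (apply summ_scal; apply (summ_inner h _ (fun j => e j + w j)); auto; apply l2_mulbl; auto).
      eapply summ_ext; [| apply (summ_plus _ _ S1 S2)].
      intros j; unfold mulZ; simpl; ring.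
    - repeat apply summ_plus; apply summ_scal; apply summ_inner; auto. }
  rewrite <- !sumZ_plus by (repeat apply summ_plus; apply summ_scal; apply summ_inner; auto).
  rewrite <- !sumZ_scal. fold Sv Sw N.
  assert (A1 : M * lam * Sv <= eps / 4).
  { unfold lam. apply Rle_trans with (eps / 4 * (M * Sv / (M * Sv + 1))); [right; field; nra|].
    assert (M * Sv / (M * Sv + 1) <= 1) by (apply Rle_div_l; nra). nra. }
  assert (A2 : (M * / lam + 2 * M * Rabs s) * N < eps / 4).
  { assert (0 <= M * / lam) by (apply Rmult_le_pos; [lra|apply Rlt_le, Rinv_0_lt_compat; lra]).
    assert (0 <= Rabs s) by apply Rabs_pos.
    apply Rle_lt_trans with ((M / lam + 2 * M + 1) * N).
    - apply Rmult_le_compat_r; [lra|]. unfold Rdiv. nra.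
    - replace (eps / 4) with ((M / lam + 2 * M + 1) * e1) by (unfold e1; field; unfold Rdiv in *; nra).
      apply Rmult_lt_compat_l; [unfold Rdiv in *; nra|lra]. }
  assert (A3 : 2 * M * Rabs s * Sw < eps / 4).
  { assert (0 <= Rabs s) by apply Rabs_pos.
    apply Rle_lt_trans with ((2 * M * Sw + 1) * Rabs s); [nra|].
    replace (eps / 4) with ((2 * M * Sw + 1) * d2) by (unfold d2; field; nra).
    apply Rmult_lt_compat_l; nra. }
  lra.
Qed.

Theorem lemma3p6 (k : nat) (beta h : R) (p : R -> R) (phi : seqZ)
  (T : R) (u u' : R -> seqZ) :
  (k = 1%nat \/ k = 2%nat) -> beta <> 0 -> 0 < h ->
  strictly_increasing p -> smooth p -> all_derivs_bounded p ->
  in_l2 phi -> 0 < T ->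
  (* u is an l^2_h-valued solution on [0,T) with time derivative u' *)
  (forall t, 0 <= t < T -> in_l2 (u t)) ->
  (forall t, 0 < t < T -> l2_deriv h u (u' t) t) ->
  (forall t, 0 < t < T -> forall j : Z,
     u' t j + Dp h (D0 h (Dm h (u t))) j
     + beta * ((INR k + 1) / (INR k + 2))
       * (u t j ^ k * D0 h (u t) j + D0 h (powZ (u t) (S k)) j)
     + h * Dp h (Dm h (Dp h (Dm h (u t)))) j = 0) ->
  u 0 = phi ->
  forall t, 0 < t < T ->
    let P := sample p h in
    let F := fun s => inner h (mulZ P (u s)) (u s) in
    let v := u t in
    ex_derive F t /\
    / 2 * Derive F t
    + inner h (Dm h v) (mulZ (Dp h P) (Dm h v))
    + / 2 * inner h (Dp h v) (mulZ (Dm h P) (Dp h v))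
    + h * inner h (Dp h (Dm h v)) (mulZ P (Dp h (Dm h v)))
    =
    - (h / 2) * inner h (Dp h (Dm h v)) (mulZ (Dp h P) (Dm h v))
    + (h / 2) * inner h (mulZ (Dp h v) (Dm h P)) (Dp h (Dm h v))
    - inner h (Dm h v) (mulZ (shm v) (D0 h (Dm h P)))
    - h * inner h (Dp h (Dm h v)) (mulZ (Dm h P) (Dm h v))
    - h * inner h (Dp h (Dm h v)) (mulZ (Dp h P) (Dp h v))
    - h * inner h (Dp h (Dm h v)) (mulZ v (Dp h (Dm h P)))
    + beta / 2 * ((INR k + 1) / (INR k + 2))
      * inner h (powZ v (S k))
          (addZ (mulZ (shp v) (Dp h P)) (mulZ (shm v) (Dm h P))).
Proof.
  intros Hk Hb Hh Hinc Hsm Hbd Hphi HT Hu Hder Heq Hu0 t Ht P F v.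
  assert (HP : bnd P).
  { destruct (Hbd 0%nat) as [M HM]. exists M. intros j. unfold P, sample. apply (HM (IZR j * h)). }
  assert (Hdv : is_derive F t (2 * inner h (mulZ P v) (u' t)))
    by (apply (deriv_F h P u (u' t) t T); auto; lra).
  split; [exists (2 * inner h (mulZ P v) (u' t)); exact Hdv|].
  rewrite (is_derive_unique _ _ _ Hdv).
  assert (Hc := core h beta k P v (u' t) ltac:(lra) HP (Hu t ltac:(lra)) (proj1 (Hder t Ht)) (Heq t Ht)).
  clearbody P v. clear F Hdv.
  apply Rminus_diag_uniq. etransitivity; [|exact Hc]. field.
  pose proof (pos_INR k). lra.
Qed.
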